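(* Let $\mathcal{G}$ be the game with players $\mathcal{N}=\{1,\dots,N\}$, where player $n$ chooses $d_n^{\mathrm{gen}}\ge 0$ and has utility $$U_n(d_n^{\mathrm{gen}},\boldsymbol d_{-n}^{\mathrm{gen}})=r_n+P_n-R_n-C_n-C_0,$$ with all quantities as defined in the context, and assume $z_n:=\sum_{n'\in\mathcal N}\gamma_{n,n'}(\xi-\phi_{n'})-\psi_n<0$ for every $n$. Define $$F(\boldsymbol d^{\mathrm{gen}})=\epsilon(\boldsymbol d^{\mathrm{gen}})-\sum_{n\in\mathcal N}\frac{\kappa_n C_n^{\mathrm{cmp}}(\eta_n+\mu_n)\,d_n^{\mathrm{gen}} f_n^2}{z_n}.$$ Then $\mathcal{G}$ is a weighted potential game with potential function $F$: for every $n\in\mathcal N$, every $\boldsymbol d_{-n}^{\mathrm{gen}}$ and every $d_n^{\mathrm{gen}},d_n'^{\,\mathrm{gen}}$, $$U_n(d_n^{\mathrm{gen}},\boldsymbol d_{-n}^{\mathrm{gen}})-U_n(d_n'^{\,\mathrm{gen}},\boldsymbol d_{-n}^{\mathrm{gen}})=z_n\big[F(d_n^{\mathrm{gen}},\boldsymbol d_{-n}^{\mathrm{gen}})-F(d_n'^{\,\mathrm{gen}},\boldsymbol d_{-n}^{\mathrm{gen}})\big].$$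
   Context: Model (one training round of cross-silo federated learning with $N$ competing organizations). Each organization $n$ has fixed local data size $d_n^{\mathrm{loc}}>0$ and chooses an amount $d_n^{\mathrm{gen}}$ of synthetic data; $\boldsymbol d^{\mathrm{gen}}=(d_1^{\mathrm{gen}},\dots,d_N^{\mathrm{gen}})$ and $\boldsymbol d_{-n}^{\mathrm{gen}}$ denotes the profile of all players except $n$. Constants: $\alpha>0,\beta>0,\delta\ge 0,\varrho>0$, $\epsilon_0$; for each $n$: $\psi_n\ge0$, $\phi_n\ge 0$, $\kappa_n>0$, $C_n^{\mathrm{cmp}}>0$, $\eta_n>0$, $\mu_n>0$, $f_n>0$; $C_0\ge 0$; $\xi\ge 0$; competitive intensities $\gamma_{n,n'}\in[0,1]$. Define the local error $\epsilon_n=\alpha(d_n^{\mathrm{loc}}+d_n^{\mathrm{gen}})^{-\beta}-\delta$ and the global error $\epsilon(\boldsymbol d^{\mathrm{gen}})=\exp\!\big((\tfrac1N\sum_{n}\epsilon_n-1)/\varrho\big)$. Cooperation gain $r_n=\psi_n[\epsilon_0-\epsilon(\boldsymbol d^{\mathrm{gen}})]$. The contribution gap of $n$ is $\Delta_n=\epsilon(\boldsymbol d^{\mathrm{gen}})-\bar\epsilon_{-n}(\boldsymbol d_{-n}^{\mathrm{gen}})$, where $\bar\epsilon_{-n}$ (written $\epsilon(\boldsymbol d^{\mathrm{gen}}_{-n})$ in the paper) depends only on the other players' strategies. Competition loss $R_n=\sum_{n'\in\mathcal N}\phi_{n'}\gamma_{n,n'}\Delta_n$; payoff redistribution $P_n=\sum_{n'\in\mathcal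 N}\xi\gamma_{n,n'}\Delta_n$; computational cost $C_n=C_n^{\mathrm{cmp}}\kappa_n\big(\eta_n(d_n^{\mathrm{loc}}+d_n^{\mathrm{gen}})+\mu_n d_n^{\mathrm{gen}}\big)f_n^2$; $C_0$ is a fixed server fee. *)

(* Defs.v *)
From mathcomp Require Import all_boot all_order all_algebra.
From mathcomp Require Import all_classical all_reals all_analysis.
Set Implicit Arguments. Unset Strict Implicit. Unset Printing Implicit Defensive.
Import Order.TTheory GRing.Theory Num.Theory.
Local Open Scope ring_scope.

Section Game.
Variable R : realType.
Variable N : nat.

Definition upd (d : 'I_N -> R) (n : 'I_N) (x : R) : 'I_N -> R :=
  fun m => if m == n then x else d m.

Definition local_err (alpha beta delta dl dg : R) : R :=
  alpha * (dl + dg) `^ (- beta) - delta.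

Definition glob_err (alpha beta delta rho : R) (dloc d : 'I_N -> R) : R :=
  expR (((N%:R)^-1 * \sum_(n < N) local_err alpha beta delta (dloc n) (d n) - 1) / rho).

Definition contrib_gap alpha beta delta rho dloc (epsm : 'I_N -> ('I_N -> R) -> R)
  (n : 'I_N) (d : 'I_N -> R) : R :=
  glob_err alpha beta delta rho dloc d - epsm n d.

Definition depends_only_on_others (epsm : 'I_N -> ('I_N -> R) -> R) : Prop :=
  forall n d d', (forall m, m != n -> d m = d' m) -> epsm n d = epsm n d'.

Definition utility (alpha beta delta rho eps0 xi C0 : R) (dloc : 'I_N -> R)
  (psi phi kappa Ccmp eta mu f : 'I_N -> R) (gamma : 'I_N -> 'I_N -> R)
  (epsm : 'I_N -> ('I_N -> R) -> R) (n : 'I_N) (d : 'I_N -> R) : R :=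
  let eps := glob_err alpha beta delta rho dloc d in
  let Dn := contrib_gap alpha beta delta rho dloc epsm n d in
  let r := psi n * (eps0 - eps) in
  let Rn := \sum_(m < N) phi m * gamma n m * Dn in
  let Pn := \sum_(m < N) xi * gamma n m * Dn in
  let Cn := Ccmp n * kappa n * (eta n * (dloc n + d n) + mu n * d n) * f n ^+ 2 in
  r + Pn - Rn - Cn - C0.

Definition zcoef (xi : R) (psi phi : 'I_N -> R) (gamma : 'I_N -> 'I_N -> R) (n : 'I_N) : R :=
  \sum_(m < N) gamma n m * (xi - phi m) - psi n.

Definition potential (alpha beta delta rho xi : R) (dloc : 'I_N -> R)
  (psi phi kappa Ccmp eta mu f : 'I_N -> R) (gamma : 'I_N -> 'I_N -> R)
  (d : 'I_N -> R) : R :=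
  glob_err alpha beta delta rho dloc d -
  \sum_(n < N) kappa n * Ccmp n * (eta n + mu n) * d n * f n ^+ 2
               / zcoef xi psi phi gamma n.

End Game.

(* Main.v *)
Require Import Defs.
From mathcomp Require Import all_boot all_order all_algebra.
From mathcomp Require Import all_classical all_reals all_analysis.
From mathcomp Require Import ring lra.
Import Order.TTheory GRing.Theory Num.Theory.
Local Open Scope ring_scope.

Theorem theorem1 (R : realType) (N : nat)
  (alpha beta delta rho eps0 xi C0 : R)
  (dloc psi phi kappa Ccmp eta mu f : 'I_N -> R)
  (gamma : 'I_N -> 'I_N -> R) (epsm : 'I_N -> ('I_N -> R) -> R) :
  0 < alpha -> 0 < beta -> 0 <= delta -> 0 < rho -> 0 <= C0 -> 0 <= xi ->
  (forall n, 0 < dloc n) -> (forall n, 0 <= psi n) -> (forall n, 0 <= phi n) ->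
  (forall n, 0 < kappa n) -> (forall n, 0 < Ccmp n) -> (forall n, 0 < eta n) ->
  (forall n, 0 < mu n) -> (forall n, 0 < f n) ->
  (forall n m, 0 <= gamma n m <= 1) ->
  depends_only_on_others epsm ->
  (forall n, zcoef xi psi phi gamma n < 0) ->
  forall (n : 'I_N) (d : 'I_N -> R) (x x' : R),
    (forall m, 0 <= d m) -> 0 <= x -> 0 <= x' ->
    utility alpha beta delta rho eps0 xi C0 dloc psi phi kappa Ccmp eta mu f gamma epsm
      n (upd d n x)
    - utility alpha beta delta rho eps0 xi C0 dloc psi phi kappa Ccmp eta mu f gamma epsm
      n (upd d n x')
    = zcoef xi psi phi gamma n *
      (potential alpha beta delta rho xi dloc psi phi kappa Ccmp eta mu f gamma (upd d n x)
       - potential alpha beta delta rho xi dloc psi phi kappa Ccmp eta mu f gamma (upd d n x')).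
Proof.
move=> _ _ _ _ _ _ _ _ _ _ _ _ _ _ _ Hdep Hz n d x x' _ _ _.
have Hzn : zcoef xi psi phi gamma n != 0 by exact: ltr0_neq0 (Hz n).
have Hem : epsm n (upd d n x) = epsm n (upd d n x').
  by apply: Hdep => m /negPf Hm; rewrite /upd Hm.
rewrite /utility /potential /contrib_gap Hem.
set E := glob_err _ _ _ _ _ (upd d n x).
set E' := glob_err _ _ _ _ _ (upd d n x').
set e := epsm n (upd d n x').
have Hs : \sum_(k < N) kappa k * Ccmp k * (eta k + mu k) * upd d n x k * f k ^+ 2 / zcoef xi psi phi gamma k
  - \sum_(k < N) kappa k * Ccmp k * (eta k + mu k) * upd d n x' k * f k ^+ 2 / zcoef xi psi phi gamma k
  = kappa n * Ccmp n * (eta n + mu n) * (x - x') * f n ^+ 2 / zcoef xi psi phi gamma n.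
  rewrite -sumrB (bigD1 n) //= big1 ?addr0.
    by rewrite /upd eqxx; field.
  by move=> k /negPf Hk; rewrite /upd Hk subrr.
have -> : E - (\sum_(k < N) kappa k * Ccmp k * (eta k + mu k) * upd d n x k * f k ^+ 2 / zcoef xi psi phi gamma k)
  - (E' - \sum_(k < N) kappa k * Ccmp k * (eta k + mu k) * upd d n x' k * f k ^+ 2 / zcoef xi psi phi gamma k)
  = E - E' - kappa n * Ccmp n * (eta n + mu n) * (x - x') * f n ^+ 2 / zcoef xi psi phi gamma n.
  by rewrite -Hs; ring.
rewrite /upd eqxx.
have Hsum : forall (g : 'I_N -> R) (A : R), \sum_(m < N) g m * gamma n m * A = (\sum_(m < N) g m * gamma n m) * A.
  by move=> g A; rewrite mulr_suml.
rewrite !Hsum.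
have Hz' : zcoef xi psi phi gamma n = \sum_(m < N) xi * gamma n m - \sum_(m < N) phi m * gamma n m - psi n.
  rewrite /zcoef -sumrB; congr (_ - _); apply: eq_bigr => m _; ring.
rewrite [zcoef _ _ _ _ _ * (_ - _ / _)]mulrBr [zcoef _ _ _ _ _ * (_ / _)]mulrC divfK // Hz'.
move: (\sum_(m < N) xi * gamma n m) (\sum_(m < N) phi m * gamma n m) => S1 S2.
clear Hs Hsum Hz' Hzn.
move: E E' e => A B C.
ring.
Qed.
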